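(* Let $F\colon\mathbf{OML}^{\mathrm{op}}\to\mathbf{Loc}$ be any functor whose restriction to boolean algebras is naturally isomorphic to the Stone spectrum functor $B\mapsto\mathrm{Idl}(B)$. Then $F(\mathrm{Proj}(M_n(\mathbb{C})))$ is the trivial locale for every $n\ge 3$.
   Context: $\mathbf{OML}$ is the category of orthomodular lattices and their (ortholattice) homomorphisms; boolean algebras are in particular orthomodular lattices. $\mathrm{Proj}(M_n(\mathbb{C}))$ is the orthomodular lattice of projections in the $n\times n$ complex matrices (equivalently, of subspaces of $\mathbb{C}^n$, with orthocomplement). The Stone spectrum of a boolean algebra $B$ is the locale whose frame is the frame $\mathrm{Idl}(B)$ of ideals of $B$. $\mathbf{Loc}$ is the category of locales; a locale is trivial if its frame satisfies $0=1$. *)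

(* Defs.v *)
From HB Require Import structures.
From mathcomp Require Import all_boot all_order all_algebra.
Set Implicit Arguments. Unset Strict Implicit. Unset Printing Implicit Defensive.
Import Order.TTheory GRing.Theory Num.Theory Num.Def.
Local Open Scope ring_scope.


Record OML := {
  ocar :> Type;
  ole : ocar -> ocar -> Prop;
  omeet : ocar -> ocar -> ocar;
  ojoin : ocar -> ocar -> ocar;
  obot : ocar;
  otop : ocar;
  ocmp : ocar -> ocar;
  ole_refl : forall x, ole x x;
  ole_trans : forall x y z, ole x y -> ole y z -> ole x z;
  ole_anti : forall x y, ole x y -> ole y x -> x = y;
  omeet_l : forall x y, ole (omeet x y) x;
  omeet_r : forall x y, ole (omeet x y) y;
  omeet_glb : forall x y z, ole z x -> ole z y -> ole z (omeet x y);
  ojoin_l : forall x y, ole x (ojoin x y);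
  ojoin_r : forall x y, ole y (ojoin x y);
  ojoin_lub : forall x y z, ole x z -> ole y z -> ole (ojoin x y) z;
  obot_le : forall x, ole obot x;
  ole_top : forall x, ole x otop;
  ocmpK : forall x, ocmp (ocmp x) = x;
  ocmp_anti : forall x y, ole x y -> ole (ocmp y) (ocmp x);
  omeet_cmp : forall x, omeet x (ocmp x) = obot;
  ojoin_cmp : forall x, ojoin x (ocmp x) = otop;
  orthomodular : forall x y, ole x y -> y = ojoin x (omeet y (ocmp x))
}.

Record OMLHom (A B : OML) := {
  ohom :> A -> B;
  ohom_meet : forall x y, ohom (@omeet A x y) = @omeet B (ohom x) (ohom y);
  ohom_join : forall x y, ohom (@ojoin A x y) = @ojoin B (ohom x) (ohom y);
  ohom_cmp : forall x, ohom (@ocmp A x) = @ocmp B (ohom x);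
  ohom_bot : ohom (@obot A) = obot B;
  ohom_top : ohom (@otop A) = otop B
}.

Definition idOMLHom (A : OML) : OMLHom A A :=
  @Build_OMLHom A A (fun x => x) (fun _ _ => erefl) (fun _ _ => erefl)
    (fun _ => erefl) erefl erefl.

Definition compOMLHom (A B D : OML) (g : OMLHom B D) (f : OMLHom A B) :
  OMLHom A D.
Proof.
refine (@Build_OMLHom A D (fun x => g (f x)) _ _ _ _ _).
- by move=> x y; rewrite !ohom_meet.
- by move=> x y; rewrite !ohom_join.
- by move=> x; rewrite !ohom_cmp.
- by rewrite !ohom_bot.
- by rewrite !ohom_top.
Defined.

(* Boolean algebras, viewed as orthomodular lattices: the distributive ones
   (a distributive ortholattice is a boolean algebra with complement ocmp). *)
Definition isBoolean (A : OML) : Prop :=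
  forall x y z : A, @omeet A x (@ojoin A y z) = @ojoin A (@omeet A x y) (@omeet A x z).

Record Frame := {
  fcar :> Type;
  fle : fcar -> fcar -> Prop;
  fsup : (fcar -> Prop) -> fcar;
  fmeet : fcar -> fcar -> fcar;
  ftop : fcar;
  fle_refl : forall x, fle x x;
  fle_trans : forall x y z, fle x y -> fle y z -> fle x z;
  fle_anti : forall x y, fle x y -> fle y x -> x = y;
  fsup_ub : forall (S : fcar -> Prop) x, S x -> fle x (fsup S);
  fsup_least : forall (S : fcar -> Prop) y, (forall x, S x -> fle x y) -> fle (fsup S) y;
  fmeet_l : forall x y, fle (fmeet x y) x;
  fmeet_r : forall x y, fle (fmeet x y) y;
  fmeet_glb : forall x y z, fle z x -> fle z y -> fle z (fmeet x y);
  fle_top : forall x, fle x ftop;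
  fmeet_sup : forall a (S : fcar -> Prop),
    fmeet a (fsup S) = fsup (fun y => exists2 x, S x & y = fmeet a x)
}.

Definition fbot (L : Frame) : L := @fsup L (fun _ => False).

Definition isFrameHom (L M : Frame) (h : L -> M) : Prop :=
  [/\ forall S : L -> Prop, h (@fsup L S) = @fsup M (fun y => exists2 x, S x & y = h x),
      forall x y, h (@fmeet L x y) = @fmeet M (h x) (h y)
    & h (@ftop L) = @ftop M].

(* A locale is presented by its frame of opens; Loc = Frm^op. *)
Definition Locale := Frame.

(* A locale map X -> Y is a frame homomorphism O(Y) -> O(X). *)
Record LocMap (X Y : Locale) := {
  lm_inv :> Y -> X;
  lm_inv_hom : isFrameHom lm_inv
}.

Definition trivial_locale (X : Locale) : Prop := fbot X = @ftop X.

Record OMLopLocFunctor := {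
  Fob : OML -> Locale;
  Fmor : forall A B : OML, OMLHom A B -> LocMap (Fob B) (Fob A);
  Fmor_id : forall (A : OML) (x : Fob A), Fmor (idOMLHom A) x = x;
  Fmor_comp : forall (A B D : OML) (f : OMLHom A B) (g : OMLHom B D) (x : Fob A),
    Fmor (compOMLHom g f) x = Fmor g (Fmor f x)
}.

(* The Stone spectrum: Idl(B), ordered by inclusion; for f : B -> B' the     *)
(* locale map Spec B' -> Spec B has frame map I |-> ideal generated by f[I]. *)
Definition isIdeal (B : OML) (I : B -> Prop) : Prop :=
  [/\ I (@obot B),
      forall x y, @ole B x y -> I y -> I x
    & forall x y, I x -> I y -> I (@ojoin B x y)].

Definition idl_map (B B' : OML) (f : OMLHom B B') (I : B -> Prop) : B' -> Prop :=
  fun y => exists2 x, I x & @ole B' y (f x).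

(* F restricted to boolean algebras is naturally isomorphic to the Stone
   spectrum functor: for each boolean B an isomorphism of frames
   eta_B : O(F B) ~= Idl(B) (an order isomorphism onto the ideals), natural
   in boolean-algebra homomorphisms f : B -> B'. *)
Definition StoneRestriction (F : OMLopLocFunctor) : Prop :=
  exists eta : forall B : OML, isBoolean B -> Fob F B -> (B -> Prop),
    (forall (B : OML) (hB : isBoolean B),
       [/\ forall x, isIdeal (eta B hB x),
           forall x y, @fle _ x y <-> (forall b, eta B hB x b -> eta B hB y b)
         & forall I, isIdeal I -> exists x, forall b, eta B hB x b <-> I b])
    /\
    (forall (B B' : OML) (hB : isBoolean B) (hB' : isBoolean B')
            (f : OMLHom B B') (x : Fob F B) (b' : B'),
       eta B' hB' (Fmor F f x) b' <-> idl_map f (eta B hB x) b').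

(* Proj(M_n(C)) = lattice of subspaces of C^n with orthocomplement.         *)
Section ProjLattice.
Variables (C : numClosedFieldType) (n : nat).

Definition adjmx (p q : nat) (A : 'M[C]_(p, q)) : 'M[C]_(q, p) := (map_mx conjC A)^T.

Lemma adjmxM p q r (A : 'M[C]_(p, q)) (B : 'M[C]_(q, r)) :
  adjmx (A *m B) = adjmx B *m adjmx A.
Proof. by rewrite /adjmx map_mxM trmx_mul. Qed.

Lemma adjmxK p q (A : 'M[C]_(p, q)) : adjmx (adjmx A) = A.
Proof.
by apply/matrixP => i j; rewrite /adjmx !mxE conjCK.
Qed.

Lemma rank_adjmx p q (A : 'M[C]_(p, q)) : \rank (adjmx A) = \rank A.
Proof. by rewrite /adjmx mxrank_tr mxrank_map. Qed.

Definition ocm (A : 'M[C]_n) : 'M[C]_n := kermx (adjmx A).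

Lemma sub_ocm p (u : 'M[C]_(p, n)) A : (u <= ocm A)%MS = (u *m adjmx A == 0).
Proof. exact: sub_kermx. Qed.

Lemma orth_sym p q (u : 'M[C]_(p, n)) (v : 'M[C]_(q, n)) :
  u *m adjmx v = 0 -> v *m adjmx u = 0.
Proof.
move=> h; rewrite -[v]adjmxK -adjmxM h.
by apply/matrixP => i j; rewrite /adjmx !mxE rmorph0.
Qed.

Lemma ocmS (A B : 'M[C]_n) : (A <= B)%MS -> (ocm B <= ocm A)%MS.
Proof.
case/submxP=> D ->; rewrite sub_ocm adjmxM mulmxA /ocm mulmx_ker mul0mx.
by [].
Qed.

Lemma sub_ocmK (A : 'M[C]_n) : (A <= ocm (ocm A))%MS.
Proof.
rewrite sub_ocm; apply/eqP/orth_sym; apply/eqP; rewrite -sub_ocm; exact: submx_refl.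
Qed.

Lemma rank_ocm (A : 'M[C]_n) : \rank (ocm A) = (n - \rank A)%N.
Proof. by rewrite /ocm mxrank_ker rank_adjmx. Qed.

Lemma ocmK (A : 'M[C]_n) : (ocm (ocm A) == A)%MS.
Proof.
have sA := sub_ocmK A.
have: (\rank A == \rank (ocm (ocm A)))%N.
  by rewrite !rank_ocm subKn ?rank_leq_col.
case: (mxrank_leqif_eq sA) => _ -> /andP[h1 h2].
by rewrite h1 h2.
Qed.

Lemma orth_self (v : 'rV[C]_n) : v *m adjmx v = 0 -> v = 0.
Proof.
move=> /matrixP /(_ 0 0); rewrite !mxE => /eqP.
rewrite psumr_eq0 => [/allP h|i _]; last by rewrite !mxE mul_conjC_ge0.
apply/matrixP => i j; rewrite (ord1 i) mxE.
have := h j (mem_index_enum j); rewrite !mxE => /implyP/(_ isT).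
by rewrite mul_conjC_eq0 => /eqP.
Qed.

Lemma cap_ocm (A : 'M[C]_n) : (A :&: ocm A = 0)%MS.
Proof.
apply/eqP/rowV0P => v; rewrite sub_capmx => /andP[/submxP[D ->]].
rewrite sub_ocm => /eqP h; apply: orth_self.
by rewrite adjmxM mulmxA h mul0mx.
Qed.

Lemma full_ocm (A : 'M[C]_n) : row_full (A + ocm A)%MS.
Proof.
rewrite /row_full; have := mxrank_sum_cap A (ocm A).
by rewrite cap_ocm mxrank0 addn0 rank_ocm subnKC ?rank_leq_col => [->|].
Qed.



Definition subsp := {A : 'M[C]_n | <<A>>%MS == A}.
Definition mksub (A : 'M[C]_n) : subsp := exist _ <<A>>%MS (introT eqP (genmx_id A)).

Lemma mksubE (A : 'M[C]_n) : (val (mksub A) :=: A)%MS.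
Proof. exact: genmxE. Qed.

Lemma subsp_eq (X Y : subsp) : (val X == val Y)%MS -> X = Y.
Proof.
case: X Y => [A hA] [B hB] /= e; apply: val_inj => /=.
move: (eq_genmx (eqmxP e)); by rewrite (eqP hA) (eqP hB).
Qed.

Lemma ocm_eqmx (A B : 'M[C]_n) : (A :=: B)%MS -> (ocm A :=: ocm B)%MS.
Proof.
move=> e; apply/eqmxP/andP; split; apply: ocmS; by rewrite e submx_refl.
Qed.

Lemma mksub_eq (A B : 'M[C]_n) : (A == B)%MS -> mksub A = mksub B.
Proof. by move=> e; apply: subsp_eq; rewrite !mksubE. Qed.

Definition sle (X Y : subsp) : Prop := (val X <= val Y)%MS.
Definition smeet (X Y : subsp) : subsp := mksub (val X :&: val Y)%MS.
Definition sjoin (X Y : subsp) : subsp := mksub (val X + val Y)%MS.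
Definition sbot : subsp := mksub 0.
Definition stop : subsp := mksub 1%:M.
Definition scmp (X : subsp) : subsp := mksub (ocm (val X)).

Lemma sle_refl X : sle X X. Proof. exact: submx_refl. Qed.
Lemma sle_trans X Y Z : sle X Y -> sle Y Z -> sle X Z.
Proof. exact: submx_trans. Qed.
Lemma sle_anti X Y : sle X Y -> sle Y X -> X = Y.
Proof. by move=> h1 h2; apply: subsp_eq; rewrite /sle in h1 h2 *; rewrite h1 h2. Qed.
Lemma smeet_l X Y : sle (smeet X Y) X.
Proof. by rewrite /sle mksubE capmxSl. Qed.
Lemma smeet_r X Y : sle (smeet X Y) Y.
Proof. by rewrite /sle mksubE capmxSr. Qed.
Lemma smeet_glb X Y Z : sle Z X -> sle Z Y -> sle Z (smeet X Y).
Proof. by rewrite /sle mksubE sub_capmx => -> ->. Qed.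
Lemma sjoin_l X Y : sle X (sjoin X Y).
Proof. by rewrite /sle mksubE addsmxSl. Qed.
Lemma sjoin_r X Y : sle Y (sjoin X Y).
Proof. by rewrite /sle mksubE addsmxSr. Qed.
Lemma sjoin_lub X Y Z : sle X Z -> sle Y Z -> sle (sjoin X Y) Z.
Proof. by rewrite /sle mksubE addsmx_sub => -> ->. Qed.
Lemma sbot_le X : sle sbot X.
Proof. by rewrite /sle mksubE sub0mx. Qed.
Lemma sle_top X : sle X stop.
Proof. by rewrite /sle mksubE submx1. Qed.
Lemma scmpK X : scmp (scmp X) = X.
Proof.
apply: subsp_eq.
have e : (val (scmp (scmp X)) :=: ocm (ocm (val X)))%MS.
  exact: eqmx_trans (mksubE _) (ocm_eqmx (mksubE _)).
apply/eqmxP; exact: eqmx_trans e (eqmxP (ocmK _)).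
Qed.
Lemma scmp_anti X Y : sle X Y -> sle (scmp Y) (scmp X).
Proof. by rewrite /sle /scmp !mksubE; apply: ocmS. Qed.
Lemma smeet_cmp X : smeet X (scmp X) = sbot.
Proof.
apply: mksub_eq; apply/eqmxP.
apply: eqmx_trans (cap_eqmx (eqmx_refl _) (mksubE _)) _.
rewrite cap_ocm; exact: eqmx_refl.
Qed.
Lemma sjoin_cmp X : sjoin X (scmp X) = stop.
Proof.
apply: mksub_eq; apply/eqmxP.
apply: eqmx_trans (adds_eqmx (eqmx_refl _) (mksubE _)) _.
by apply/eqmxP; rewrite submx1 submx_full // full_ocm.
Qed.
Lemma sorthomod X Y : sle X Y -> Y = sjoin X (smeet Y (scmp X)).
Proof.
rewrite /sle => h; apply: subsp_eq; apply/eqmxP/eqmx_sym.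
apply: eqmx_trans (mksubE _) _.
apply: eqmx_trans (adds_eqmx (eqmx_refl _) (mksubE _)) _.
apply: eqmx_trans (adds_eqmx (eqmx_refl _) (cap_eqmx (eqmx_refl _) (mksubE _))) _.
rewrite capmxC; apply: eqmx_trans (matrix_modl _ h) _.
by apply/eqmxP; rewrite capmxSr sub_capmx submx_refl submx_full ?full_ocm.
Qed.
End ProjLattice.


Definition ProjOML (C : numClosedFieldType) (n : nat) : OML :=
  @Build_OML (subsp C n) (@sle C n) (@smeet C n) (@sjoin C n) (@sbot C n)
    (@stop C n) (@scmp C n)
    (@sle_refl C n) (@sle_trans C n) (@sle_anti C n)
    (@smeet_l C n) (@smeet_r C n) (@smeet_glb C n)
    (@sjoin_l C n) (@sjoin_r C n) (@sjoin_lub C n)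
    (@sbot_le C n) (@sle_top C n) (@scmpK C n) (@scmp_anti C n)
    (@smeet_cmp C n) (@sjoin_cmp C n) (@sorthomod C n).

(* Main.v *)
Require Import Defs.
From HB Require Import structures.
From mathcomp Require Import all_boot all_order all_algebra.
From Stdlib Require Import ClassicalEpsilon FunctionalExtensionality ProofIrrelevance PropExtensionality.
Set Implicit Arguments. Unset Strict Implicit. Unset Printing Implicit Defensive.
Import GRing.Theory Num.Theory.
Local Open Scope ring_scope.

Section FrameL.
Variable L : Frame.
Implicit Types x y z : L.
Definition fjoin x y : L := fsup (fun z => z = x \/ z = y).
Lemma fjoin_l x y : fle x (fjoin x y). Proof. by apply: fsup_ub; left. Qed.
Lemma fjoin_r x y : fle y (fjoin x y). Proof. by apply: fsup_ub; right. Qed.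
Lemma fjoin_lub x y z : fle x z -> fle y z -> fle (fjoin x y) z.
Proof. by move=> h1 h2; apply: fsup_least => w [->|->]. Qed.
Lemma fbot_le x : fle (fbot L) x. Proof. by apply: fsup_least. Qed.
Lemma fdistr a x y : fle (fmeet a (fjoin x y)) (fjoin (fmeet a x) (fmeet a y)).
Proof.
rewrite {1}/fjoin fmeet_sup; apply: fsup_least => z [w [->|->] ->];
  [apply: fjoin_l|apply: fjoin_r].
Qed.
End FrameL.

Lemma fhom_join (L M : Frame) (g : L -> M) : isFrameHom g ->
  forall x y, g (fjoin x y) = fjoin (g x) (g y).
Proof.
case=> hs _ _ x y; rewrite /fjoin hs; congr fsup.
apply: functional_extensionality => z; apply: propositional_extensionality.
split; first by case=> w [->|->] ->; [left|right].
by case=> ->; [exists x; [left|]|exists y; [right|]].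
Qed.

Lemma fhom_bot (L M : Frame) (g : L -> M) : isFrameHom g -> g (fbot L) = fbot M.
Proof.
case=> hs _ _; rewrite /fbot hs; congr fsup.
apply: functional_extensionality => z; apply: propositional_extensionality.
by split=> // -[].
Qed.

Lemma OMLHom_ext (A B : OML) (h1 h2 : OMLHom A B) :
  (forall x, h1 x = h2 x) -> h1 = h2.
Proof.
case: h1 h2 => f1 m1 j1 c1 b1 t1 [f2 m2 j2 c2 b2 t2] /= e.
have ef : f1 = f2 := functional_extensionality _ _ e.
subst f2; f_equal; apply: proof_irrelevance.
Qed.

Lemma ole_meet (A : OML) (x y : A) : ole x y -> omeet x y = x.
Proof.
move=> h; apply: ole_anti; first exact: omeet_l.
by apply: omeet_glb => //; apply: ole_refl.
Qed.

Lemma ohom_mono (A B : OML) (f : OMLHom A B) (x y : A) : ole x y -> ole (f x) (f y).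
Proof. by move=> /ole_meet h; rewrite -h ohom_meet; apply: omeet_r. Qed.

Section Psi.
Variable F : OMLopLocFunctor.
Variable eta : forall B : OML, isBoolean B -> Fob F B -> (B -> Prop).
Hypothesis hiso : forall (B : OML) (hB : isBoolean B),
       [/\ forall x, isIdeal (eta hB x),
           forall x y, @fle _ x y <-> (forall b, eta hB x b -> eta hB y b)
         & forall I, isIdeal I -> exists x, forall b, eta hB x b <-> I b].
Hypothesis hnat : forall (B B' : OML) (hB : isBoolean B) (hB' : isBoolean B')
            (f : OMLHom B B') (x : Fob F B) (b' : B'),
       eta hB' (Fmor F f x) b' <-> idl_map f (eta hB x) b'.

Definition dn (B : OML) (b : B) : B -> Prop := fun c => ole c b.
Lemma dn_ideal (B : OML) (b : B) : isIdeal (dn b).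
Proof.
split; first exact: obot_le.
  by move=> x y h1 h2; apply: ole_trans h1 h2.
by move=> x y; apply: ojoin_lub.
Qed.

Section OneB.
Variables (B : OML) (hB : isBoolean B).

Definition xb (b : B) : Fob F B :=
  proj1_sig (constructive_indefinite_description _
     (let: And3 _ _ h := hiso hB in h _ (dn_ideal b))).

Lemma xbE b c : eta hB (xb b) c <-> ole c b.
Proof.
rewrite /xb; case: constructive_indefinite_description => x /= h; exact: h.
Qed.

Lemma eta_le (x y : Fob F B) : fle x y <-> (forall b, eta hB x b -> eta hB y b).
Proof. by case: (hiso hB). Qed.

Lemma eta_ideal (x : Fob F B) : isIdeal (eta hB x).
Proof. by case: (hiso hB). Qed.

Lemma xb_mono b c : ole b c -> fle (xb b) (xb c).
Proof.
move=> h; apply/eta_le => d /xbE hd; apply/xbE; exact: ole_trans hd h.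
Qed.

Lemma xb_join b c : xb (ojoin b c) = fjoin (xb b) (xb c).
Proof.
apply: fle_anti; last by apply: fjoin_lub; apply: xb_mono; [apply: ojoin_l|apply: ojoin_r].
apply/eta_le => d /xbE hd.
have [I0 Id Ij] := eta_ideal (fjoin (xb b) (xb c)).
apply: Id hd _; apply: Ij.
  by move/eta_le: (fjoin_l (xb b) (xb c)); apply; apply/xbE; apply: ole_refl.
by move/eta_le: (fjoin_r (xb b) (xb c)); apply; apply/xbE; apply: ole_refl.
Qed.

Lemma xb_meet b c : xb (omeet b c) = fmeet (xb b) (xb c).
Proof.
apply: fle_anti; first by apply: fmeet_glb; apply: xb_mono; [apply: omeet_l|apply: omeet_r].
apply/eta_le => d hd; apply/xbE; apply: omeet_glb.
  by apply/xbE; move/eta_le: (fmeet_l (xb b) (xb c)); apply.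
by apply/xbE; move/eta_le: (fmeet_r (xb b) (xb c)); apply.
Qed.

Lemma xb_bot : xb (obot B) = fbot _.
Proof.
apply: fle_anti; last exact: fbot_le.
apply/eta_le => d /xbE hd; have [I0 Id _] := eta_ideal (fbot (Fob F B)).
exact: Id hd I0.
Qed.

Lemma xb_top : xb (otop B) = ftop _.
Proof.
apply: fle_anti; first exact: fle_top.
by apply/eta_le => d _; apply/xbE; apply: ole_top.
Qed.
End OneB.

Definition psi (B P : OML) (hB : isBoolean B) (h : OMLHom B P) (b : B) : Fob F P :=
  Fmor F h (xb hB b).

Section PsiProps.
Variables (B P : OML) (hB : isBoolean B) (h : OMLHom B P).
Let hh := lm_inv_hom (Fmor F h).
Lemma psi_join b c : psi hB h (ojoin b c) = fjoin (psi hB h b) (psi hB h c).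
Proof. by rewrite /psi xb_join (fhom_join hh). Qed.
Lemma psi_meet b c : psi hB h (omeet b c) = fmeet (psi hB h b) (psi hB h c).
Proof. by rewrite /psi xb_meet; case: hh => _ -> _. Qed.
Lemma psi_bot : psi hB h (obot B) = fbot _.
Proof. by rewrite /psi xb_bot (fhom_bot hh). Qed.
Lemma psi_top : psi hB h (otop B) = ftop _.
Proof. by rewrite /psi xb_top; case: hh => _ _ ->. Qed.
End PsiProps.

Lemma psi_nat (B B' P : OML) (hB : isBoolean B) (hB' : isBoolean B')
  (f : OMLHom B B') (h' : OMLHom B' P) (h : OMLHom B P) :
  (forall x, h x = h' (f x)) -> forall b, psi hB h b = psi hB' h' (f b).
Proof.
move=> e b; have -> : h = compOMLHom h' f by apply: OMLHom_ext.
rewrite /psi Fmor_comp; congr (Fmor F h' _).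
apply: fle_anti; apply/(eta_le hB') => d.
  move/hnat=> [x /xbE hx hd]; apply/xbE; apply: ole_trans hd _; exact: ohom_mono.
move/xbE=> hd; apply/hnat; exists b => //; apply/xbE; apply: ole_refl.
Qed.
End Psi.

Section SetOML.
Variable T : finType.
Implicit Types A B D : {set T}.
Definition sub_ A B : Prop := A \subset B.
Lemma s_refl A : sub_ A A. Proof. exact: subxx. Qed.
Lemma s_trans A B D : sub_ A B -> sub_ B D -> sub_ A D. Proof. exact: subset_trans. Qed.
Lemma s_anti A B : sub_ A B -> sub_ B A -> A = B.
Proof. by move=> h1 h2; apply/eqP; rewrite eqEsubset h1 h2. Qed.
Lemma s_ml A B : sub_ (A :&: B) A. Proof. exact: subsetIl. Qed.
Lemma s_mr A B : sub_ (A :&: B) B. Proof. exact: subsetIr. Qed.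
Lemma s_glb A B D : sub_ D A -> sub_ D B -> sub_ D (A :&: B).
Proof. by move=> h1 h2; rewrite /sub_ subsetI h1 h2. Qed.
Lemma s_jl A B : sub_ A (A :|: B). Proof. exact: subsetUl. Qed.
Lemma s_jr A B : sub_ B (A :|: B). Proof. exact: subsetUr. Qed.
Lemma s_lub A B D : sub_ A D -> sub_ B D -> sub_ (A :|: B) D.
Proof. by move=> h1 h2; rewrite /sub_ subUset h1 h2. Qed.
Lemma s_bot A : sub_ set0 A. Proof. exact: sub0set. Qed.
Lemma s_top A : sub_ A setT. Proof. exact: subsetT. Qed.
Lemma s_cK A : ~: ~: A = A. Proof. exact: setCK. Qed.
Lemma s_canti A B : sub_ A B -> sub_ (~: B) (~: A). Proof. by rewrite /sub_ setCS. Qed.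
Lemma s_mc A : A :&: ~: A = set0. Proof. exact: setICr. Qed.
Lemma s_jc A : A :|: ~: A = setT. Proof. exact: setUCr. Qed.
Lemma s_om A B : sub_ A B -> B = A :|: (B :&: ~: A).
Proof.
move=> /subsetP h; apply/setP => x; rewrite !inE.
by case: (boolP (x \in A)) => [/h -> //|_]; rewrite /= andbT.
Qed.

Definition setOML : OML :=
  @Build_OML {set T} sub_ (@setI T) (@setU T) set0 setT (@setC T)
    s_refl s_trans s_anti s_ml s_mr s_glb s_jl s_jr s_lub s_bot s_top s_cK s_canti
    s_mc s_jc s_om.

Lemma setOML_bool : isBoolean setOML.
Proof. by move=> x y z; apply: setIUr. Qed.
End SetOML.

Section Decomp.
Variables (C : numClosedFieldType) (n : nat).
Implicit Types X Y A B : 'M[C]_n.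

Lemma ocm_sym X Y : (X <= ocm Y)%MS = (Y <= ocm X)%MS.
Proof. by rewrite !sub_ocm; apply/eqP/eqP => /orth_sym. Qed.

Lemma ocm_adds X A B : (X <= ocm (A + B)%MS)%MS = (X <= ocm A)%MS && (X <= ocm B)%MS.
Proof. by rewrite ocm_sym addsmx_sub -!(ocm_sym X). Qed.

Variables (m : nat) (q : 'I_m -> subsp C n).
Implicit Types S T : {set 'I_m}.
Hypothesis horth : forall i j, i != j -> (val (q i) <= ocm (val (q j)))%MS.

Definition Sg (S : {set 'I_m}) : 'M[C]_n := (\sum_(i in S) val (q i))%MS.

Hypothesis hfull : (1%:M <= Sg setT)%MS.

Lemma Sg_sub S Y : (Sg S <= Y)%MS = [forall i, (i \in S) ==> (val (q i) <= Y)%MS].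
Proof.
apply/sumsmx_subP/forallP => h i; first by apply/implyP; exact: h.
by move=> hi; move/implyP: (h i); apply.
Qed.

Lemma Sg_sup S i : i \in S -> (val (q i) <= Sg S)%MS.
Proof. by move=> hi; apply: (sumsmx_sup i). Qed.

Lemma out_orth S i : i \notin S -> (Sg S <= ocm (val (q i)))%MS.
Proof.
move=> hi; rewrite Sg_sub; apply/forallP => j; apply/implyP => hj.
by apply: horth; apply: contraNneq hi => <-.
Qed.

Lemma Sg_mono S T : S \subset T -> (Sg S <= Sg T)%MS.
Proof.
move=> /subsetP h; rewrite Sg_sub; apply/forallP => i; apply/implyP => hi.
by apply: Sg_sup; apply: h.
Qed.

Lemma orth_S S T : [disjoint S & T] -> (Sg S <= ocm (Sg T))%MS.
Proof.
move=> hd; rewrite Sg_sub; apply/forallP => i; apply/implyP => hi.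
rewrite ocm_sym; apply: out_orth.
by apply: contraTN hi => hiT; rewrite (disjointFl hd hiT).
Qed.

Lemma full_split S : (1%:M <= Sg S + Sg (~: S))%MS.
Proof.
apply: submx_trans hfull _; rewrite Sg_sub; apply/forallP => i; apply/implyP => _.
case: (boolP (i \in S)) => hi.
  by apply: submx_trans (addsmxSl _ _); apply: Sg_sup.
by apply: submx_trans (addsmxSr _ _); apply: Sg_sup; rewrite inE.
Qed.

Lemma ocm_Sg S : (ocm (Sg S) == Sg (~: S))%MS.
Proof.
have h1 : (Sg (~: S) <= ocm (Sg S))%MS.
  by apply: orth_S; rewrite disjoint_sym disjoints_subset setCK subxx.
apply/andP; split => //.
have := mxrank_leqif_sup h1; case => _ <-.
rewrite eqn_leq; apply/andP; split.
  by have := mxrankS h1; rewrite rank_ocm.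
rewrite rank_ocm leq_subLR.
have := mxrankS (full_split S); rewrite mxrank1 => hr.
apply: leq_trans hr _; have [] := mxrank_adds_leqif (Sg S) (Sg (~: S)) => //.
Qed.

Lemma Sg_setC S : (Sg S == ocm (Sg (~: S)))%MS.
Proof. by have := ocm_Sg (~: S); rewrite setCK => /andP[h1 h2]; apply/andP. Qed.

Definition hDf (S : setOML 'I_m) : ProjOML C n := mksub (Sg S).

Lemma hD_join S T : hDf (S :|: T) = sjoin (hDf S) (hDf T).
Proof.
apply: mksub_eq; rewrite /hDf; apply/andP; split; rewrite ?mksubE.
  rewrite Sg_sub; apply/forallP => i; apply/implyP; rewrite inE => /orP[] hi.
    by apply: submx_trans (addsmxSl _ _); rewrite mksubE; apply: Sg_sup.
  by apply: submx_trans (addsmxSr _ _); rewrite mksubE; apply: Sg_sup.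
by rewrite addsmx_sub !mksubE !Sg_mono ?subsetUl ?subsetUr.
Qed.

Lemma hD_meet S T : hDf (S :&: T) = smeet (hDf S) (hDf T).
Proof.
apply: mksub_eq; rewrite /hDf; apply/andP; split; rewrite ?mksubE.
  by rewrite sub_capmx !mksubE !Sg_mono ?subsetIl ?subsetIr.
have /andP[_ hh] := Sg_setC (S :&: T); apply: submx_trans hh; rewrite ocm_sym Sg_sub.
apply/forallP => i; apply/implyP; rewrite !inE negb_and => hi.
rewrite ocm_sym; case/orP: hi => hi.
  by apply: submx_trans (capmxSl _ _) _; rewrite mksubE; apply: out_orth.
by apply: submx_trans (capmxSr _ _) _; rewrite mksubE; apply: out_orth.
Qed.

Lemma hD_cmp S : hDf (~: S) = scmp (hDf S).
Proof.
apply: mksub_eq; rewrite /hDf.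
have e := ocm_eqmx (mksubE (Sg S)).
have /andP[h1 h2] := ocm_Sg S; apply/andP. rewrite ?mksubE ?e. by [].
Qed.

Lemma hD_bot : hDf set0 = sbot C n.
Proof.
apply: mksub_eq; rewrite /hDf; apply/andP; rewrite ?mksubE sub0mx; split => //; rewrite Sg_sub.
by apply/forallP => i; rewrite inE.
Qed.

Lemma hD_top : hDf setT = stop C n.
Proof. by apply: mksub_eq; rewrite /hDf; apply/andP; rewrite ?mksubE submx1 hfull. Qed.

Definition hD : OMLHom (setOML 'I_m) (ProjOML C n) :=
  @Build_OMLHom (setOML 'I_m) (ProjOML C n) hDf hD_meet hD_join hD_cmp hD_bot hD_top.
End Decomp.

Definition o0 : 'I_2 := ord0.
Definition o1 : 'I_2 := Ordinal (isT : 1 < 2)%N.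
Lemma I2_cases (j : 'I_2) : j = o0 \/ j = o1.
Proof. by case: j => -[|[|k]] hk; [left|right|]; try apply: val_inj. Qed.
Lemma o1_neq : (o1 == o0) = false. Proof. by []. Qed.

Lemma hom2_ext (P : OML) (g1 g2 : OMLHom (setOML 'I_2) P) :
  g1 [set o0] = g2 [set o0] -> forall S : {set 'I_2}, g1 S = g2 S.
Proof.
move=> e S.
have e1 : g1 (~: [set o0] : setOML 'I_2) = g2 (~: [set o0] : setOML 'I_2).
  by rewrite -[~: _]/(ocmp (_ : setOML 'I_2)) !ohom_cmp e.
case: (boolP (o0 \in S)) => h0; case: (boolP (o1 \in S)) => h1.
- have -> : S = setT.
    by apply/setP => j; case: (I2_cases j) => ->; rewrite inE.
  by rewrite -[setT]/(otop (setOML 'I_2)) !ohom_top.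
- have -> : S = [set o0] => //.
  by apply/setP => j; case: (I2_cases j) => ->; rewrite !inE ?eqxx ?o1_neq ?(negbTE h1).
- have -> : S = ~: [set o0] => //.
  by apply/setP => j; case: (I2_cases j) => ->; rewrite !inE ?eqxx ?o1_neq ?(negbTE h0).
- have -> : S = set0.
    by apply/setP => j; case: (I2_cases j) => ->; rewrite !inE ?(negbTE h0) ?(negbTE h1).
  by rewrite -[set0]/(obot (setOML 'I_2)) !ohom_bot.
Qed.

Section Atoms.
Variables (C : numClosedFieldType) (n : nat).

Definition q2 (p : subsp C n) (i : 'I_2) : subsp C n := if i == o0 then p else scmp p.

Lemma q2_orth p : forall i j, i != j -> (val (q2 p i) <= ocm (val (q2 p j)))%MS.
Proof.
move=> i j hij; rewrite /q2; case: (i =P o0) => [ei|hi]; case: (j =P o0) => [ej|hj] /=.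
- by move: hij; rewrite ei ej eqxx.
- by rewrite (ocm_eqmx (mksubE _)); apply: sub_ocmK.
- by rewrite mksubE; apply: submx_refl.
- by move: hij; case: (I2_cases i) hi => // ->; case: (I2_cases j) hj => // ->; rewrite eqxx.
Qed.

Lemma q2_full p : (1%:M <= Sg (q2 p) setT)%MS.
Proof.
have h : (val p + val (scmp p) <= Sg (q2 p) setT)%MS.
  rewrite addsmx_sub; apply/andP; split.
    by have := Sg_sup (q2 p) (in_setT o0).
  by have := Sg_sup (q2 p) (in_setT o1).
apply: submx_trans h; apply: submx_trans (submx_full _ (full_ocm (val p))) _.
by apply: addsmxS; rewrite ?mksubE submx_refl.
Qed.
End Atoms.

Lemma Sg_set1 (C : numClosedFieldType) (n m : nat) (q : 'I_m -> subsp C n) i :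
  (Sg q [set i] == val (q i))%MS.
Proof.
apply/andP; split; last by apply: Sg_sup; rewrite inE.
by rewrite Sg_sub; apply/forallP => j; apply/implyP; rewrite inE => /eqP ->.
Qed.

Section Fm.
Variables (m : nat) (i : 'I_m).
Definition fmf (S : setOML 'I_2) : setOML 'I_m :=
  [set j | if j == i then o0 \in S else o1 \in S].
Lemma fm_meet S T : fmf (S :&: T) = fmf S :&: fmf T.
Proof. by apply/setP => j; rewrite !inE; case: (j == i); rewrite ?inE. Qed.
Lemma fm_join S T : fmf (S :|: T) = fmf S :|: fmf T.
Proof. by apply/setP => j; rewrite !inE; case: (j == i); rewrite ?inE. Qed.
Lemma fm_cmp S : fmf (~: S) = ~: fmf S.
Proof. by apply/setP => j; rewrite !inE; case: (j == i); rewrite ?inE. Qed.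
Lemma fm_bot : fmf set0 = set0.
Proof. by apply/setP => j; rewrite !inE; case: (j == i); rewrite ?inE. Qed.
Lemma fm_top : fmf setT = setT.
Proof. by apply/setP => j; rewrite !inE; case: (j == i); rewrite ?inE. Qed.
Definition fm : OMLHom (setOML 'I_2) (setOML 'I_m) :=
  @Build_OMLHom (setOML 'I_2) (setOML 'I_m) fmf fm_meet fm_join fm_cmp fm_bot fm_top.
Lemma fm_o0 : fmf [set o0] = [set i].
Proof.
by apply/setP => j; rewrite !inE; case: (j == i).
Qed.
End Fm.

Section U.
Variable F : OMLopLocFunctor.
Variable eta : forall B : OML, isBoolean B -> Fob F B -> (B -> Prop).
Hypothesis hiso : forall (B : OML) (hB : isBoolean B),
       [/\ forall x, isIdeal (eta hB x),
           forall x y, @fle _ x y <-> (forall b, eta hB x b -> eta hB y b)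
         & forall I, isIdeal I -> exists x, forall b, eta hB x b <-> I b].
Hypothesis hnat : forall (B B' : OML) (hB : isBoolean B) (hB' : isBoolean B')
            (f : OMLHom B B') (x : Fob F B) (b' : B'),
       eta hB' (Fmor F f x) b' <-> idl_map f (eta hB x) b'.
Variables (C : numClosedFieldType) (n : nat).

Definition D2hom (p : subsp C n) := hD (@q2_orth C n p) (@q2_full C n p).
Definition u (p : subsp C n) : Fob F (ProjOML C n) :=
  psi hiso (@setOML_bool 'I_2) (D2hom p) [set o0].

Lemma atomE m (q : 'I_m -> subsp C n) horth hfull i :
  psi hiso (@setOML_bool 'I_m) (@hD C n m q horth hfull) [set i] = u (q i).
Proof.
rewrite /u (psi_nat hiso hnat (@setOML_bool 'I_2) (@setOML_bool 'I_m) (f := fm i) (h' := hD horth hfull)).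
  by rewrite /= fm_o0.
apply: (hom2_ext (g2 := compOMLHom (hD horth hfull) (fm i))).
rewrite /= fm_o0; apply: mksub_eq.
have /andP[a1 a2] := Sg_set1 q i.
have /andP[b1 b2] := Sg_set1 (q2 (q i)) o0.
have e : q2 (q i) o0 = q i by rewrite /q2 eqxx.
rewrite e in b1 b2.
by apply/andP; split; [exact: submx_trans b1 a2|exact: submx_trans a1 b2].
Qed.
End U.

Inductive ktree := KConf | KNode of nat & ktree & ktree & ktree.

Section KS.
Variable triples : seq (nat * nat * nat).
Definition trip i := nth (0, 0, 0)%N triples i.
Definition in_trip (x y : nat) (t : nat * nat * nat) : bool :=
  let: (a, b, c) := t in
  [|| (x == a) && (y == b), (x == b) && (y == a), (x == a) && (y == c),
      (x == c) && (y == a), (x == b) && (y == c) | (x == c) && (y == b)].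
Definition orthb x y := has (in_trip x y) triples.
Definition kc x (T : seq nat) t (rec : bool) :=
  if t is KConf then has (orthb x) T else rec.
Fixpoint kcheck (T : seq nat) (t : ktree) : bool :=
  match t with
  | KConf => false
  | KNode i t1 t2 t3 =>
      let: (a, b, c) := trip i in
      [&& (i < size triples)%N, kc a T t1 (kcheck (a :: T) t1),
          kc b T t2 (kcheck (b :: T) t2) & kc c T t3 (kcheck (c :: T) t3)]
  end.

Variables (L : Frame) (x : nat -> L) (w : L).
Hypothesis H1 : forall i, (i < size triples)%N -> let: (a, b, c) := trip i in
  fle (ftop L) (fjoin (fjoin (fjoin (x a) (x b)) (x c)) w).
Hypothesis H2 : forall a b, orthb a b -> fle (fmeet (x a) (x b)) w.

Definition mT (T : seq nat) : L := foldr (fun a acc => fmeet (x a) acc) (ftop L) T.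

Lemma mT_le T y : y \in T -> fle (mT T) (x y).
Proof.
elim: T => //= a T IH; rewrite inE => /orP[/eqP->|h]; first exact: fmeet_l.
exact: fle_trans (fmeet_r _ _) (IH h).
Qed.

Lemma split_join (m p q z : L) : fle (fmeet m p) z -> fle (fmeet m q) z ->
  fle (fmeet m (fjoin p q)) z.
Proof. move=> h1 h2; apply: fle_trans (fdistr _ _ _) _; exact: fjoin_lub. Qed.

Lemma kc_ok a T t (rec : bool) : kc a T t rec -> (rec -> fle (mT (a :: T)) w) ->
  fle (fmeet (mT T) (x a)) w.
Proof.
case: t => [|i t1 t2 t3] /=.
  move=> /hasP[y yT hy] _.
  apply: fle_trans (H2 hy); apply: fmeet_glb; first exact: fmeet_r.
  exact: fle_trans (fmeet_l _ _) (mT_le yT).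
move=> hr /(_ hr) h; apply: fle_trans h.
by apply: fmeet_glb; [apply: fmeet_r|apply: fmeet_l].
Qed.

Lemma kcheck_ok t T : kcheck T t -> fle (mT T) w.
Proof.
elim: t T => [|i t1 IH1 t2 IH2 t3 IH3] T //=.
case e: (trip i) => [[a b] c] /and4P[hi h1 h2 h3].
have J := H1 hi; rewrite e in J.
have hm : fle (mT T) (fmeet (mT T) (fjoin (fjoin (fjoin (x a) (x b)) (x c)) w)).
  by apply: fmeet_glb; [apply: fle_refl|apply: fle_trans (fle_top _) J].
apply: fle_trans hm _.
apply: split_join; last exact: fmeet_r.
apply: split_join; last exact: kc_ok h3 (IH3 _).
apply: split_join; first exact: kc_ok h1 (IH1 _).
exact: kc_ok h2 (IH2 _).
Qed.
End KS.

Definition rays : seq (int * int * int) := [::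
  ((Posz 0), (Posz 0), (Posz 1));
  ((Posz 0), (Posz 1), (Negz 1));
  ((Posz 0), (Posz 1), (Negz 0));
  ((Posz 0), (Posz 1), (Posz 0));
  ((Posz 0), (Posz 1), (Posz 1));
  ((Posz 0), (Posz 1), (Posz 2));
  ((Posz 0), (Posz 2), (Negz 0));
  ((Posz 0), (Posz 2), (Posz 1));
  ((Posz 1), (Negz 4), (Negz 1));
  ((Posz 1), (Negz 4), (Posz 2));
  ((Posz 1), (Negz 3), (Negz 0));
  ((Posz 1), (Negz 3), (Posz 1));
  ((Posz 1), (Negz 1), (Negz 4));
  ((Posz 1), (Negz 1), (Negz 1));
  ((Posz 1), (Negz 1), (Negz 0));
  ((Posz 1), (Negz 1), (Posz 0));
  ((Posz 1), (Negz 1), (Posz 1));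
  ((Posz 1), (Negz 1), (Posz 2));
  ((Posz 1), (Negz 1), (Posz 5));
  ((Posz 1), (Negz 0), (Negz 3));
  ((Posz 1), (Negz 0), (Negz 1));
  ((Posz 1), (Negz 0), (Negz 0));
  ((Posz 1), (Negz 0), (Posz 0));
  ((Posz 1), (Negz 0), (Posz 1));
  ((Posz 1), (Negz 0), (Posz 2));
  ((Posz 1), (Negz 0), (Posz 4));
  ((Posz 1), (Posz 0), (Negz 1));
  ((Posz 1), (Posz 0), (Negz 0));
  ((Posz 1), (Posz 0), (Posz 0));
  ((Posz 1), (Posz 0), (Posz 1));
  ((Posz 1), (Posz 0), (Posz 2));
  ((Posz 1), (Posz 1), (Negz 3));
  ((Posz 1), (Posz 1), (Negz 1));
  ((Posz 1), (Posz 1), (Negz 0));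
  ((Posz 1), (Posz 1), (Posz 0));
  ((Posz 1), (Posz 1), (Posz 1));
  ((Posz 1), (Posz 1), (Posz 2));
  ((Posz 1), (Posz 1), (Posz 4));
  ((Posz 1), (Posz 2), (Negz 4));
  ((Posz 1), (Posz 2), (Negz 1));
  ((Posz 1), (Posz 2), (Negz 0));
  ((Posz 1), (Posz 2), (Posz 0));
  ((Posz 1), (Posz 2), (Posz 1));
  ((Posz 1), (Posz 2), (Posz 2));
  ((Posz 1), (Posz 2), (Posz 5));
  ((Posz 1), (Posz 4), (Negz 0));
  ((Posz 1), (Posz 4), (Posz 1));
  ((Posz 1), (Posz 5), (Negz 1));
  ((Posz 1), (Posz 5), (Posz 2));
  ((Posz 2), (Negz 4), (Negz 3));
  ((Posz 2), (Negz 4), (Negz 0));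
  ((Posz 2), (Negz 4), (Posz 1));
  ((Posz 2), (Negz 4), (Posz 4));
  ((Posz 2), (Negz 3), (Negz 4));
  ((Posz 2), (Negz 3), (Posz 5));
  ((Posz 2), (Negz 1), (Negz 0));
  ((Posz 2), (Negz 1), (Posz 1));
  ((Posz 2), (Negz 0), (Negz 4));
  ((Posz 2), (Negz 0), (Negz 1));
  ((Posz 2), (Negz 0), (Negz 0));
  ((Posz 2), (Negz 0), (Posz 0));
  ((Posz 2), (Negz 0), (Posz 1));
  ((Posz 2), (Negz 0), (Posz 2));
  ((Posz 2), (Negz 0), (Posz 5));
  ((Posz 2), (Posz 0), (Negz 0));
  ((Posz 2), (Posz 0), (Posz 1));
  ((Posz 2), (Posz 1), (Negz 4));
  ((Posz 2), (Posz 1), (Negz 1));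
  ((Posz 2), (Posz 1), (Negz 0));
  ((Posz 2), (Posz 1), (Posz 0));
  ((Posz 2), (Posz 1), (Posz 1));
  ((Posz 2), (Posz 1), (Posz 2));
  ((Posz 2), (Posz 1), (Posz 5));
  ((Posz 2), (Posz 2), (Negz 0));
  ((Posz 2), (Posz 2), (Posz 1));
  ((Posz 2), (Posz 4), (Negz 4));
  ((Posz 2), (Posz 4), (Posz 5));
  ((Posz 2), (Posz 5), (Negz 3));
  ((Posz 2), (Posz 5), (Negz 0));
  ((Posz 2), (Posz 5), (Posz 1));
  ((Posz 2), (Posz 5), (Posz 4));
  ((Posz 4), (Negz 4), (Negz 1));
  ((Posz 4), (Negz 4), (Posz 2));
  ((Posz 4), (Negz 1), (Negz 4));
  ((Posz 4), (Negz 1), (Posz 5));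
  ((Posz 4), (Negz 0), (Negz 0));
  ((Posz 4), (Negz 0), (Posz 1));
  ((Posz 4), (Posz 1), (Negz 0));
  ((Posz 4), (Posz 1), (Posz 1));
  ((Posz 4), (Posz 2), (Negz 4));
  ((Posz 4), (Posz 2), (Posz 5));
  ((Posz 4), (Posz 5), (Negz 1));
  ((Posz 4), (Posz 5), (Posz 2));
  ((Posz 5), (Negz 3), (Negz 1));
  ((Posz 5), (Negz 3), (Posz 2));
  ((Posz 5), (Negz 1), (Negz 3));
  ((Posz 5), (Negz 1), (Negz 0));
  ((Posz 5), (Negz 1), (Posz 1));
  ((Posz 5), (Negz 1), (Posz 4));
  ((Posz 5), (Negz 0), (Negz 1));
  ((Posz 5), (Negz 0), (Posz 2));
  ((Posz 5), (Posz 1), (Negz 1));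
  ((Posz 5), (Posz 1), (Posz 2));
  ((Posz 5), (Posz 2), (Negz 3));
  ((Posz 5), (Posz 2), (Negz 0));
  ((Posz 5), (Posz 2), (Posz 1));
  ((Posz 5), (Posz 2), (Posz 4));
  ((Posz 5), (Posz 4), (Negz 1));
  ((Posz 5), (Posz 4), (Posz 2))].

Definition ktrips : seq (nat * nat * nat) := [::
  (0, 3, 28)%N;
  (0, 15, 69)%N;
  (0, 22, 34)%N;
  (0, 41, 60)%N;
  (1, 7, 28)%N;
  (1, 14, 105)%N;
  (1, 42, 96)%N;
  (1, 55, 108)%N;
  (1, 74, 93)%N;
  (2, 4, 28)%N;
  (2, 13, 88)%N;
  (2, 21, 70)%N;
  (2, 35, 59)%N;
  (2, 43, 85)%N;
  (3, 26, 65)%N;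
  (3, 27, 29)%N;
  (3, 30, 64)%N;
  (4, 17, 87)%N;
  (4, 23, 68)%N;
  (4, 33, 61)%N;
  (4, 39, 86)%N;
  (5, 6, 28)%N;
  (5, 16, 104)%N;
  (5, 40, 97)%N;
  (5, 56, 107)%N;
  (5, 73, 94)%N;
  (6, 20, 102)%N;
  (6, 36, 99)%N;
  (6, 58, 106)%N;
  (6, 71, 95)%N;
  (7, 24, 101)%N;
  (7, 32, 100)%N;
  (7, 62, 103)%N;
  (7, 67, 98)%N;
  (8, 32, 65)%N;
  (9, 36, 64)%N;
  (10, 29, 67)%N;
  (11, 27, 71)%N;
  (12, 16, 69)%N;
  (13, 54, 69)%N;
  (13, 62, 73)%N;
  (13, 65, 77)%N;
  (14, 18, 69)%N;
  (14, 29, 33)%N;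
  (15, 66, 70)%N;
  (15, 67, 90)%N;
  (15, 68, 72)%N;
  (15, 71, 89)%N;
  (16, 27, 35)%N;
  (17, 53, 69)%N;
  (17, 58, 74)%N;
  (17, 64, 80)%N;
  (19, 34, 56)%N;
  (20, 23, 34)%N;
  (20, 47, 65)%N;
  (21, 24, 34)%N;
  (21, 29, 40)%N;
  (22, 31, 74)%N;
  (22, 32, 35)%N;
  (22, 33, 36)%N;
  (22, 37, 73)%N;
  (23, 27, 42)%N;
  (24, 48, 64)%N;
  (25, 34, 55)%N;
  (26, 51, 70)%N;
  (26, 56, 92)%N;
  (26, 61, 79)%N;
  (26, 74, 82)%N;
  (27, 46, 62)%N;
  (29, 45, 58)%N;
  (30, 50, 68)%N;
  (30, 55, 91)%N;
  (30, 59, 78)%N;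
  (30, 73, 81)%N;
  (38, 42, 60)%N;
  (39, 49, 65)%N;
  (39, 55, 71)%N;
  (39, 60, 76)%N;
  (40, 44, 60)%N;
  (41, 57, 61)%N;
  (41, 58, 84)%N;
  (41, 59, 63)%N;
  (41, 62, 83)%N;
  (43, 52, 64)%N;
  (43, 56, 67)%N;
  (43, 60, 75)%N].

Definition kcert : ktree := (KNode 0 (KNode 4 (KNode 42 KConf (KNode 57 KConf (KNode 63 (KNode 74 (KNode 9 (KNode 39 KConf (KNode 44 KConf (KNode 55 KConf (KNode 16 KConf (KNode 18 KConf (KNode 15 KConf KConf (KNode 19 KConf KConf (KNode 14 KConf KConf (KNode 20 KConf KConf (KNode 31 KConf KConf (KNode 33 KConf KConf (KNode 40 KConf (KNode 45 KConf KConf (KNode 46 KConf KConf (KNode 48 (KNode 21 KConf (KNode 23 KConf KConf (KNode 25 KConf KConf (KNode 35 (KNode 37 (KNode 47 KConf KConf (KNode 50 (KNode 58 KConf KConf KConf) KConf KConf)) KConf KConf) KConf KConf))) KConf) KConf KConf))) KConf))))))) KConf) KConf) KConf) KConf) KConf) (KNode 43 KConf (KNode 11 KConf KConf (KNode 14 KConf KConf (KNode 10 KConf KConf (KNode 31 KConf KConf (KNode 33 KConf KConf (KNode 39 KConf (KNode 45 KConf KConf (KNode 46 KConf KConf (KNode 49 KConf (KNode 50 KConf KConf KConf) KConf))) KConf)))))) KConf) KConf) KConf KConf) KConf KConf) KConf) KConf) (KNode 45 KConf KConf (KNode 55 (KNode 9 KConf (KNode 15 KConf (KNode 6 KConf KConf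 (KNode 12 KConf KConf (KNode 16 KConf KConf (KNode 13 KConf KConf (KNode 36 (KNode 38 (KNode 43 (KNode 44 KConf (KNode 46 KConf KConf (KNode 47 KConf KConf (KNode 49 KConf (KNode 53 (KNode 14 KConf (KNode 8 KConf KConf (KNode 21 (KNode 27 KConf KConf (KNode 29 KConf KConf (KNode 34 (KNode 40 (KNode 50 KConf (KNode 52 (KNode 57 KConf (KNode 58 KConf KConf KConf) KConf) KConf KConf) KConf) KConf KConf) KConf KConf))) KConf KConf)) KConf) KConf KConf) KConf))) KConf) KConf KConf) KConf KConf) KConf KConf))))) KConf) KConf) KConf KConf)) KConf) (KNode 1 KConf (KNode 36 (KNode 37 (KNode 64 KConf (KNode 70 KConf (KNode 2 KConf (KNode 34 (KNode 35 (KNode 43 (KNode 4 KConf (KNode 8 KConf KConf (KNode 40 (KNode 9 KConf (KNode 11 KConf (KNode 12 KConf KConf (KNode 3 KConf KConf (KNode 6 KConf KConf (KNode 13 KConf KConf (KNode 48 (KNode 21 KConf (KNode 23 KConf KConf (KNode 25 KConf KConf (KNode 49 KConf (KNode 50 KConf KConf KConf) KConf))) KConf) KConf KConf))))) KConf) KConf) KConf KConf)) KConf) KConf KConf) KConf KConf) KConf KConf) (KNode 11 (KNode 18 KConf KConf KConf) KConf KConf)) KConf) KConf) KConf KConf) KConf KConf) (KNode 41 KConf KConf (KNode 43 KConf KConf (KNode 2 KConf KConf (KNode 9 (KNode 17 KConf KConf (KNode 18 KConf KConf (KNode 35 (KNode 44 KConf (KNode 48 KConf KConf KConf) KConf) KConf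 KConf))) KConf KConf))))) (KNode 1 KConf (KNode 11 KConf (KNode 2 KConf (KNode 8 KConf KConf (KNode 12 KConf KConf (KNode 3 KConf KConf (KNode 6 KConf KConf (KNode 13 KConf KConf (KNode 15 KConf (KNode 16 KConf KConf (KNode 17 KConf KConf (KNode 18 KConf KConf KConf))) KConf)))))) KConf) KConf) (KNode 5 KConf KConf (KNode 10 KConf KConf (KNode 17 KConf KConf (KNode 22 KConf KConf (KNode 2 KConf (KNode 8 KConf KConf (KNode 12 KConf KConf (KNode 3 KConf KConf (KNode 6 KConf KConf (KNode 13 KConf KConf (KNode 16 KConf KConf (KNode 19 KConf KConf (KNode 14 KConf KConf (KNode 20 KConf KConf (KNode 23 KConf KConf (KNode 25 KConf KConf (KNode 26 KConf KConf (KNode 27 KConf KConf (KNode 30 KConf KConf (KNode 31 KConf KConf (KNode 40 KConf (KNode 15 KConf KConf (KNode 11 KConf KConf (KNode 28 KConf KConf (KNode 33 KConf KConf (KNode 45 KConf KConf (KNode 48 KConf KConf KConf)))))) KConf)))))))))))))))) (KNode 7 KConf KConf (KNode 11 KConf KConf (KNode 14 KConf KConf (KNode 18 KConf KConf (KNode 16 KConf KConf (KNode 13 KConf KConf (KNode 20 KConf KConf (KNode 24 KConf KConf (KNode 26 KConf KConf (KNode 27 KConf KConf (KNode 30 KConf KConf (KNode 31 KConf KConf (KNode 58 KConf KConf (KNode 15 KConf KConf (KNode 19 KConf KConf (KNode 3 KConf KConf (KNode 6 KConf KConf (KNode 23 KConf KConf (KNode 28 KConf KConf (KNode 33 KConf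 KConf (KNode 45 KConf KConf (KNode 50 KConf KConf (KNode 59 KConf KConf KConf)))))))))))))))))))))))))))))).

Lemma kcert_ok : kcheck ktrips [::] kcert.
Proof. by vm_compute. Qed.

Definition dot3 (a b : int * int * int) : int :=
  a.1.1 * b.1.1 + a.1.2 * b.1.2 + a.2 * b.2.

Section Geo.
Variables (C : numClosedFieldType) (n : nat).

Definition vec3 (t : int * int * int) : 'rV[C]_3 :=
  \row_(k < 3) (nth 0 [:: t.1.1; t.1.2; t.2] k)%:~R.

Lemma conj_int (z : int) : (z%:~R : C)^* = z%:~R.
Proof. by rewrite rmorph_int. Qed.

Lemma vec3_dot a b : vec3 a *m adjmx (vec3 b) = ((dot3 a b)%:~R)%:M.
Proof.
apply/matrixP => i j; rewrite (ord1 i) (ord1 j) !mxE /= !big_ord_recr big_ord0 /=.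
rewrite !mxE /= !conj_int /dot3 /=.
by rewrite add0r !intrD !intrM.
Qed.
End Geo.

Section Geo2.
Variables (C : numClosedFieldType) (n : nat) (f : 'I_3 -> 'I_n).
Hypothesis finj : injective f.

Definition Mf : 'M[C]_(3, n) := \matrix_(k, m) (m == f k)%:R.

Lemma Mf_adj : Mf *m adjmx Mf = 1%:M.
Proof.
apply/matrixP => k k'; rewrite !mxE (bigD1 (f k)) //= big1 => [|m hm].
  rewrite !mxE eqxx (inj_eq finj) mul1r addr0.
  by case: (k == k'); rewrite ?rmorph1 ?rmorph0.
by rewrite !mxE (negbTE hm) mul0r.
Qed.

Definition ray (v : 'rV[C]_n) : subsp C n := mksub <<v>>%MS.

Lemma val_ray v : (val (ray v) :=: v)%MS.
Proof. exact: eqmx_trans (mksubE _) (genmxE v). Qed.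

Lemma orth_eq (X : 'M[C]_n) (u v : 'rV[C]_n) :
  (X <= v)%MS -> u *m adjmx v = 0 -> (u <= ocm X)%MS.
Proof.
move=> /submxP[D ->] h; rewrite sub_ocm adjmxM mulmxA h mul0mx //.
Qed.

Definition emb (t : int * int * int) : 'rV[C]_n := vec3 C t *m Mf.

Lemma emb_dot a b : emb a *m adjmx (emb b) = ((dot3 a b)%:~R)%:M.
Proof. by rewrite /emb adjmxM mulmxA -(mulmxA (vec3 C a)) Mf_adj mulmx1 vec3_dot. Qed.

Lemma ray_orth a b : dot3 a b = 0 -> (val (ray (emb a)) <= ocm (val (ray (emb b))))%MS.
Proof.
move=> h; rewrite val_ray; apply: (orth_eq (v := emb b)); first by rewrite val_ray submx_refl.
by rewrite emb_dot h; apply/matrixP => i j; rewrite !mxE mul0rn.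
Qed.

Lemma emb_neq0 a : dot3 a a != 0 -> emb a != 0.
Proof.
move=> h; apply/eqP => e; have := emb_dot a a; rewrite e mul0mx.
move/matrixP/(_ 0 0); rewrite !mxE eqxx /= => /esym/eqP.
by rewrite mulr1n intr_eq0 (negbTE h).
Qed.

Definition E := mksub <<Mf>>%MS.

Lemma valE : (val E :=: Mf)%MS.
Proof. exact: eqmx_trans (mksubE _) (genmxE Mf). Qed.

Lemma ray_E a : (val (ray (emb a)) <= val E)%MS.
Proof. by rewrite val_ray valE submxMl. Qed.

Lemma ray_W a : (val (ray (emb a)) <= ocm (val (scmp E)))%MS.
Proof.
rewrite (ocm_eqmx (mksubE _)); apply: submx_trans (ray_E a) _; exact: sub_ocmK.
Qed.

Lemma rank_orth_add (X Y : 'M[C]_n) : (X <= ocm Y)%MS -> \rank (X + Y)%MS = (\rank X + \rank Y)%N.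
Proof.
move=> h; have := mxrank_sum_cap X Y.
have -> : \rank (X :&: Y)%MS = 0%N.
  apply/eqP; rewrite -leqn0; have := mxrankS (capmxS h (submx_refl Y)).
  by rewrite [(ocm Y :&: Y)%MS]capmxC cap_ocm mxrank0.
by rewrite addn0.
Qed.

Variables (a b c : int * int * int).
Hypotheses (hab : dot3 a b = 0) (hac : dot3 a c = 0) (hbc : dot3 b c = 0).
Hypotheses (ha : dot3 a a != 0) (hb : dot3 b b != 0) (hc : dot3 c c != 0).

Lemma dot3C x y : dot3 x y = dot3 y x.
Proof. by rewrite /dot3 mulrC [_ * y.1.2]mulrC [_ * y.2]mulrC. Qed.

Definition a0 : 'I_4 := Ordinal (isT : 0 < 4)%N.
Definition a1 : 'I_4 := Ordinal (isT : 1 < 4)%N.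
Definition a2 : 'I_4 := Ordinal (isT : 2 < 4)%N.
Definition a3 : 'I_4 := Ordinal (isT : 3 < 4)%N.
Lemma I4_cases (i : 'I_4) : [\/ i = a0, i = a1, i = a2 | i = a3].
Proof.
case: i => -[|[|[|[|k]]]] hi; [apply: Or41|apply: Or42|apply: Or43|apply: Or44|by []];
  exact: val_inj.
Qed.

Definition q4 (i : 'I_4) : subsp C n :=
  match nat_of_ord i with
  | 0 => ray (emb a) | 1 => ray (emb b) | 2 => ray (emb c) | _ => scmp E end.

Lemma q4_orth : forall i j, i != j -> (val (q4 i) <= ocm (val (q4 j)))%MS.
Proof.
have hba : dot3 b a = 0 by rewrite dot3C.
have hca : dot3 c a = 0 by rewrite dot3C.
have hcb : dot3 c b = 0 by rewrite dot3C.
move=> i j hij.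
case: (I4_cases i) hij => ->; case: (I4_cases j) => -> hij;
  first [by rewrite eqxx in hij | idtac].
- exact: ray_orth hab.
- exact: ray_orth hac.
- exact: ray_W.
- exact: ray_orth hba.
- exact: ray_orth hbc.
- exact: ray_W.
- exact: ray_orth hca.
- exact: ray_orth hcb.
- exact: ray_W.
- by rewrite ocm_sym; apply: ray_W.
- by rewrite ocm_sym; apply: ray_W.
- by rewrite ocm_sym; apply: ray_W.
Qed.

Lemma q4_full : (1%:M <= Sg q4 setT)%MS.
Proof.
set Y := (val (ray (emb a)) + val (ray (emb b)) + val (ray (emb c)))%MS.
have hY : (Y + val (scmp E) <= Sg q4 setT)%MS.
  have s0 : (val (ray (emb a)) <= Sg q4 setT)%MS := Sg_sup q4 (in_setT a0).
  have s1 : (val (ray (emb b)) <= Sg q4 setT)%MS := Sg_sup q4 (in_setT a1).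
  have s2 : (val (ray (emb c)) <= Sg q4 setT)%MS := Sg_sup q4 (in_setT a2).
  have s3 : (val (scmp E) <= Sg q4 setT)%MS := Sg_sup q4 (in_setT a3).
  by rewrite !addsmx_sub s0 s1 s2 s3.
apply: submx_trans hY.
have r1 x : dot3 x x != 0 -> \rank (val (ray (emb x))) = 1%N.
  move=> hx; rewrite val_ray rank_rV (emb_neq0 hx); reflexivity.
have hba : dot3 b a = 0 by rewrite dot3C.
have hca : dot3 c a = 0 by rewrite dot3C.
have hcb : dot3 c b = 0 by rewrite dot3C.
have o1 : (val (ray (emb a)) + val (ray (emb b)) <= ocm (val (ray (emb c))))%MS.
  by rewrite addsmx_sub (ray_orth hac) (ray_orth hbc).
have rY : \rank Y = 3%N.
  by rewrite /Y (rank_orth_add o1) (rank_orth_add (ray_orth hab)) (r1 _ ha) (r1 _ hb) (r1 _ hc).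
have YE : (Y <= val E)%MS.
  by rewrite !addsmx_sub (ray_E a) (ray_E b) (ray_E c).
have EY : (val E <= Y)%MS.
  have [_ e] := mxrank_leqif_sup YE.
  rewrite -e eqn_leq (mxrankS YE) rY valE /=.
  exact: rank_leq_row.
apply: submx_trans (submx_full _ (full_ocm (val E))) _.
apply: addsmxS; first exact: EY.
rewrite mksubE; exact: submx_refl.
Qed.
End Geo2.

Section Coord.
Variables (C : numClosedFieldType) (n : nat).

Definition qc (l : 'I_n) : subsp C n := ray (delta_mx 0 l : 'rV[C]_n).

Lemma delta_orth (l l' : 'I_n) : l != l' ->
  (delta_mx 0 l : 'rV[C]_n) *m adjmx (delta_mx 0 l' : 'rV[C]_n) = 0.
Proof.
move=> h; apply/matrixP => i j; rewrite !mxE big1 // => k _; rewrite !mxE.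
case: (k =P l) => [->|_]; last by rewrite andbF mul0r.
by rewrite eq_sym (negbTE h) andbF rmorph0 mulr0.
Qed.

Lemma qc_orth : forall i j, i != j -> (val (qc i) <= ocm (val (qc j)))%MS.
Proof.
move=> i j h; rewrite /qc val_ray; apply: (orth_eq (v := (delta_mx 0 j : 'rV[C]_n))).
  rewrite val_ray; exact: submx_refl.
exact: delta_orth.
Qed.

Lemma qc_full : (1%:M <= Sg qc setT)%MS.
Proof.
apply/row_subP => i; rewrite row1.
have s : (val (qc i) <= Sg qc setT)%MS := Sg_sup qc (in_setT i).
apply: submx_trans s; rewrite /qc val_ray; exact: submx_refl.
Qed.

Variables (f : 'I_3 -> 'I_n).
Lemma emb100 : @emb C n f (Posz 1, Posz 0, Posz 0) = (delta_mx 0 (f 0) : 'rV[C]_n).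
Proof.
apply/matrixP => i j; rewrite !mxE !big_ord_recr big_ord0 /= !mxE /=.
rewrite (ord1 i) eqxx /=.
have -> : widen_ord (leqnSn 2) (widen_ord (leqnSn 1) ord_max) = (0 : 'I_3) by apply: val_inj.
by rewrite mulr1z !mulr0z !mul0r add0r mul1r !addr0 eq_sym.
Qed.
End Coord.

Definition r0 : int * int * int := (Posz 0, Posz 0, Posz 0).
Definition goodt (t : nat * nat * nat) : bool :=
  let: (i, j, k) := t in
  let a := nth r0 rays i in let b := nth r0 rays j in let c := nth r0 rays k in
  [&& dot3 a b == 0, dot3 a c == 0, dot3 b c == 0, dot3 a a != 0,
      dot3 b b != 0 & dot3 c c != 0].
Lemma all_good : all goodt ktrips. Proof. by vm_compute. Qed.
Lemma t0_in : (0, 3, 28)%N \in ktrips. Proof. by vm_compute. Qed.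
Lemma ray28 : nth r0 rays 28 = (Posz 1, Posz 0, Posz 0). Proof. by vm_compute. Qed.

Lemma fmeetC (L : Frame) (x y : L) : fmeet x y = fmeet y x.
Proof.
by apply: fle_anti; apply: fmeet_glb; try apply: fmeet_l; apply: fmeet_r.
Qed.

Lemma fjoin_bot (L : Frame) : fjoin (fbot L) (fbot L) = fbot L.
Proof. by apply: fle_anti; [apply: fjoin_lub; apply: fle_refl|apply: fbot_le]. Qed.

Section Final.
Variable F : OMLopLocFunctor.
Variable eta : forall B : OML, isBoolean B -> Fob F B -> (B -> Prop).
Hypothesis hiso : forall (B : OML) (hB : isBoolean B),
       [/\ forall x, isIdeal (eta hB x),
           forall x y, @fle _ x y <-> (forall b, eta hB x b -> eta hB y b)
         & forall I, isIdeal I -> exists x, forall b, eta hB x b <-> I b].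
Hypothesis hnat : forall (B B' : OML) (hB : isBoolean B) (hB' : isBoolean B')
            (f : OMLHom B B') (x : Fob F B) (b' : B'),
       eta hB' (Fmor F f x) b' <-> idl_map f (eta hB x) b'.
Variables (C : numClosedFieldType) (n : nat).
Let P := ProjOML C n.
Let L := Fob F P.

Lemma psi_all_bot m (h : OMLHom (setOML 'I_m) P) :
  (forall i, psi hiso (@setOML_bool 'I_m) h [set i] = fbot L) ->
  forall S, psi hiso (@setOML_bool 'I_m) h S = fbot L.
Proof.
move=> hi S; elim: {S}_.+1 {-2}S (ltnSn #|S|) => // k IH S hS.
case: (set_0Vmem S) => [->|[x hx]]; first exact: psi_bot.
have -> : S = [set x] :|: (S :\ x) by rewrite setD1K.
rewrite (psi_join hiso (@setOML_bool 'I_m) h [set x] (S :\ x)) hi IH ?fjoin_bot //.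
by move: hS; rewrite (cardsD1 x S) hx.
Qed.

Section Key.
Variables (f : 'I_3 -> 'I_n) (finj : injective f).
Definition xk (k : nat) : L := u hiso (ray (@emb C n f (nth r0 rays k))).
Definition wk : L := u hiso (scmp (E C f)).

Lemma trip_facts i j k : (i, j, k) \in ktrips ->
  [/\ fle (ftop L) (fjoin (fjoin (fjoin (xk i) (xk j)) (xk k)) wk),
      fmeet (xk i) (xk j) = fbot L, fmeet (xk i) (xk k) = fbot L,
      fmeet (xk j) (xk k) = fbot L & fmeet (xk k) wk = fbot L].
Proof.
move=> /(allP all_good) /=.
set a := nth r0 rays i; set b := nth r0 rays j; set c := nth r0 rays k.
case/and5P => /eqP hab /eqP hac /eqP hbc ha /andP[hb hc].
set hh := hD (q4_orth C finj hab hac hbc) (q4_full C finj hab hac hbc ha hb hc).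
have e0 : psi hiso (@setOML_bool 'I_4) hh [set a0] = xk i := atomE hiso hnat _ _ a0.
have e1 : psi hiso (@setOML_bool 'I_4) hh [set a1] = xk j := atomE hiso hnat _ _ a1.
have e2 : psi hiso (@setOML_bool 'I_4) hh [set a2] = xk k := atomE hiso hnat _ _ a2.
have e3 : psi hiso (@setOML_bool 'I_4) hh [set a3] = wk := atomE hiso hnat _ _ a3.
have dj (p q : 'I_4) : p != q ->
    fmeet (psi hiso (@setOML_bool 'I_4) hh [set p]) (psi hiso (@setOML_bool 'I_4) hh [set q])
    = fbot L.
  move=> hpq; rewrite -(psi_meet hiso (@setOML_bool 'I_4) hh [set p] [set q]).
  have -> : @omeet (setOML 'I_4) [set p] [set q] = set0.
    by apply/setP => z; rewrite !inE; case: (z =P p) => // ->; rewrite (negbTE hpq).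
  exact: psi_bot.
split.
- rewrite -(psi_top hiso (@setOML_bool 'I_4) hh).
  have -> : (otop (setOML 'I_4)) = @ojoin (setOML 'I_4) (@ojoin (setOML 'I_4) (@ojoin (setOML 'I_4) [set a0] [set a1]) [set a2]) [set a3].
    by apply/setP => z; rewrite !inE; case: (I4_cases z) => ->.
  rewrite !(psi_join hiso (@setOML_bool 'I_4) hh) e0 e1 e2 e3; exact: fle_refl.
- by rewrite -e0 -e1 dj.
- by rewrite -e0 -e2 dj.
- by rewrite -e1 -e2 dj.
- by rewrite -e2 -e3 dj.
Qed.

Lemma key : u hiso (ray (delta_mx 0 (f 0) : 'rV[C]_n)) = fbot L.
Proof.
have H1 : forall i, (i < size ktrips)%N -> let: (a, b, c) := trip ktrips i in
    fle (ftop L) (fjoin (fjoin (fjoin (xk a) (xk b)) (xk c)) wk).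
  move=> i hi; case e: (trip ktrips i) => [[a b] c].
  have m : (a, b, c) \in ktrips by rewrite -e /trip mem_nth.
  by case: (trip_facts m).
have H2 : forall a b, orthb ktrips a b -> fle (fmeet (xk a) (xk b)) wk.
  move=> a b /hasP[[[i j] k] ht hin].
  have [_ m1 m2 m3 _] := trip_facts ht.
  have hb : forall p q, fmeet (xk p) (xk q) = fbot L -> fle (fmeet (xk p) (xk q)) wk.
    by move=> p q ->; apply: fbot_le.
  rewrite /in_trip in hin.
  case/orP: hin => [/andP[/eqP-> /eqP->]|]; first exact: hb.
  case/orP => [/andP[/eqP-> /eqP->]|]; first by apply: hb; rewrite fmeetC.
  case/orP => [/andP[/eqP-> /eqP->]|]; first exact: hb.
  case/orP => [/andP[/eqP-> /eqP->]|]; first by apply: hb; rewrite fmeetC.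
  case/orP => [/andP[/eqP-> /eqP->]|]; first exact: hb.
  by move=> /andP[/eqP-> /eqP->]; apply: hb; rewrite fmeetC.
have tw : fle (ftop L) wk := kcheck_ok H1 H2 kcert_ok.
have [_ _ _ _ m] := trip_facts t0_in.
have -> : u hiso (ray (delta_mx 0 (f 0) : 'rV[C]_n)) = xk 28.
  by rewrite /xk ray28 emb100.
apply: fle_anti; last exact: fbot_le.
rewrite -m; apply: fmeet_glb; first exact: fle_refl.
exact: fle_trans (fle_top _) tw.
Qed.
End Key.

Lemma final (hn : (3 <= n)%N) : fbot L = ftop L.
Proof.
have n0 : (0 < n)%N by apply: leq_trans hn.
have hc : forall l : 'I_n, u hiso (qc C l) = fbot L.
  move=> l.
  pose fl (k : 'I_3) : 'I_n := Ordinal (ltn_pmod (l + k) n0).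
  have finj : injective fl.
    move=> k k' /(congr1 val) /= /eqP; rewrite eqn_modDl !modn_small => [/eqP e||].
    - exact: val_inj.
    - exact: leq_trans (ltn_ord k') hn.
    - exact: leq_trans (ltn_ord k) hn.
  have e : fl 0 = l by apply: val_inj; rewrite /= addn0 modn_small.
  by rewrite -(key finj) e.
set hh := hD (@qc_orth C n) (@qc_full C n).
have ha : forall i, psi hiso (@setOML_bool 'I_n) hh [set i] = fbot L.
  by move=> i; rewrite (atomE hiso hnat _ _ i) hc.
rewrite -(psi_top hiso (@setOML_bool 'I_n) hh).
exact/esym/psi_all_bot.
Qed.
End Final.

Local Close Scope ring_scope.

Theorem mainTheorem10 (F : OMLopLocFunctor) (hF : StoneRestriction F)
  (C : numClosedFieldType) (n : nat) (hn : (3 <= n)%N) :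
  trivial_locale (Fob F (ProjOML C n)).
Proof.
case: hF => eta [hiso hnat].
exact: (final hiso hnat C hn).
Qed.
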